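(* Let $(q,E)$ be an annotated CQ (a CQ $q$ together with a collection $E=(E^+,E^-)$ of labeled examples of the same arity as $q$), and let $q'$ be a CQ. Then: (1) $q'$ is a $\preceq^{\mathrm{cod}}$-generalization for $(q,E)$ if and only if $q'$ is a containment-based generalization for $(q,E)$; (2) $q'$ is a $\preceq^{\mathrm{cod}}$-specialization for $(q,E)$ if and only if $q'$ is a containment-based specialization for $(q,E)$.
   Context: A schema is a finite set of relation symbols with arities; a database instance is a finite set of facts $R(a_1,\dots,a_n)$. A data example of arity $k$ is a pair $(I,\mathbf a)$ with $I$ an instance and $\mathbf a$ a $k$-tuple of values of $I$. A $k$-ary conjunctive query (CQ) is $q(x_1,\dots,x_k)\text{ :- }\alpha_1,\dots,\alpha_n$ with relational atoms $\alpha_i$ without constants, where every answer variable occurs in some atom; $q(I)$ is its usual set of answers. For a query $q$, $[\![q]\!]$ is the set of data examples $(I,\mathbf a)$ with $\mathbf a\in q(I)$. $q_1\subseteq q_2$ means $q_1(I)\subseteq q_2(I)$ for all instances $I$; $q_1\equiv q_2$ means containment both ways; $q_1\subsetneq q_2$ means $q_1\subseteq q_2$ and $q_1\not\equiv q_2$. A collection of labeled examples is $E=(E^+,E^-)$ (sets of positive and negative data examples); $q$ fits $E$ if $E^+\subseteq [\![q]\!]$ and $E^-\cap[\![q]\!]=\emptyset$. Candidate queries are CQs using only relation symbols occurring in $q$ or $E$. Containment of difference: $q_1\preceq^{\mathrm{cod}}_q q_2$ iff $[\![q]\!]\oplus[\![q_1]\!]\subseteq[\![q]\!]\oplus[\![q_2]\!]$,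 where $\oplus$ is symmetric difference; $q_1\prec_q q_2$ means $q_1\preceq_q q_2$ and not $q_2\preceq_q q_1$. For a family of pre-orders $\preceq=(\preceq_q)_q$: a $\preceq$-generalization for $(q,E)$ is a CQ $q'$ with (i) $q'$ fits $E$ and $q\subseteq q'$, and (ii) no CQ $q''$ satisfying (i) has $q''\prec_q q'$; a $\preceq$-specialization is defined the same way with $q'\subseteq q$ (resp. $q''\subseteq q$) in place of $q\subseteq q'$. A containment-based generalization for $(q,E)$ is a CQ $q'$ fitting $E$ with $q\subseteq q'$ such that there is no CQ $q''$ fitting $E$ with $q\subseteq q''\subsetneq q'$. A containment-based specialization for $(q,E)$ is a CQ $q'$ fitting $E$ with $q'\subseteq q$ such that there is no CQ $q''$ fitting $E$ with $q'\subsetneq q''\subseteq q$. *)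

(* Defs.v *)
From Stdlib Require Import List.
Import ListNotations.

Record schema := Schema {
  sym : Type;
  arity : sym -> nat;
  sym_finite : exists l : list sym, forall s, In s l
}.

Definition value := nat.
Definition var := nat.

Section CQ.
Variable S : schema.

Definition fact := (sym S * list value)%type.
Definition instance := list fact.

Definition wf_fact (f : fact) : Prop := length (snd f) = arity S (fst f).
Definition wf_instance (I : instance) : Prop := forall f, In f I -> wf_fact f.

Definition in_adom (I : instance) (a : value) : Prop :=
  exists f, In f I /\ In a (snd f).

Definition data_example := (instance * list value)%type.
Definition wf_example (D : data_example) : Prop :=
  wf_instance (fst D) /\ forall a, In a (snd D) -> in_adom (fst D) a.

(** Conjunctive queries: answer variables [cq_head] (arity = its length)
    and a list of relational atoms [cq_body] (no constants). *)
Definition atom := (sym S * list var)%type.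
Record cq := CQ { cq_head : list var; cq_body : list atom }.

Definition cq_arity (q : cq) : nat := length (cq_head q).

Definition wf_cq (q : cq) : Prop :=
  (forall at0, In at0 (cq_body q) -> length (snd at0) = arity S (fst at0)) /\
  (forall x, In x (cq_head q) -> exists at0, In at0 (cq_body q) /\ In x (snd at0)).

Definition answer (q : cq) (I : instance) (a : list value) : Prop :=
  exists h : var -> value,
    (forall at0, In at0 (cq_body q) -> In (fst at0, map h (snd at0)) I) /\
    map h (cq_head q) = a.

Definition sem (q : cq) (D : data_example) : Prop :=
  wf_example D /\ answer q (fst D) (snd D).

Definition contained (q1 q2 : cq) : Prop :=
  forall I a, wf_instance I -> answer q1 I a -> answer q2 I a.
Definition equivalent (q1 q2 : cq) : Prop := contained q1 q2 /\ contained q2 q1.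
Definition strictly_contained (q1 q2 : cq) : Prop :=
  contained q1 q2 /\ ~ equivalent q1 q2.

Record examples := Examples { pos : list data_example; neg : list data_example }.

Definition fits (q : cq) (E : examples) : Prop :=
  (forall D, In D (pos E) -> sem q D) /\
  (forall D, In D (neg E) -> ~ sem q D).

Definition annotated (q : cq) (E : examples) : Prop :=
  wf_cq q /\
  forall D, In D (pos E) \/ In D (neg E) ->
    wf_example D /\ length (snd D) = cq_arity q.

Definition sym_in_E (E : examples) (R : sym S) : Prop :=
  exists D f, (In D (pos E) \/ In D (neg E)) /\ In f (fst D) /\ fst f = R.
Definition candidate (q : cq) (E : examples) (q' : cq) : Prop :=
  wf_cq q' /\
  forall at0, In at0 (cq_body q') ->
    (exists at1, In at1 (cq_body q) /\ fst at1 = fst at0) \/ sym_in_E E (fst at0).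

Definition symdiff (q q1 : cq) (D : data_example) : Prop :=
  (sem q D /\ ~ sem q1 D) \/ (sem q1 D /\ ~ sem q D).
Definition cod_le (q q1 q2 : cq) : Prop :=
  forall D, symdiff q q1 D -> symdiff q q2 D.

Definition strict (le : cq -> cq -> cq -> Prop) (q q1 q2 : cq) : Prop :=
  le q q1 q2 /\ ~ le q q2 q1.

Definition pre_generalization (le : cq -> cq -> cq -> Prop)
    (q : cq) (E : examples) (q' : cq) : Prop :=
  (candidate q E q' /\ fits q' E /\ contained q q') /\
  ~ (exists q'', (candidate q E q'' /\ fits q'' E /\ contained q q'') /\
                 strict le q q'' q').

Definition pre_specialization (le : cq -> cq -> cq -> Prop)
    (q : cq) (E : examples) (q' : cq) : Prop :=
  (candidate q E q' /\ fits q' E /\ contained q' q) /\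
  ~ (exists q'', (candidate q E q'' /\ fits q'' E /\ contained q'' q) /\
                 strict le q q'' q').

Definition cont_generalization (q : cq) (E : examples) (q' : cq) : Prop :=
  (candidate q E q' /\ fits q' E /\ contained q q') /\
  ~ (exists q'', candidate q E q'' /\ fits q'' E /\
                 contained q q'' /\ strictly_contained q'' q').

Definition cont_specialization (q : cq) (E : examples) (q' : cq) : Prop :=
  (candidate q E q' /\ fits q' E /\ contained q' q) /\
  ~ (exists q'', candidate q E q'' /\ fits q'' E /\
                 strictly_contained q' q'' /\ contained q'' q).

End CQ.

(* Main.v *)
Require Import Defs.
From Stdlib Require Import List Classical.
Import ListNotations.

Lemma sem_of_contained (S : schema) (q1 q2 : cq S) D :
  contained S q1 q2 -> sem S q1 D -> sem S q2 D.
Proof.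
  intros Hc [Hw Ha]. split; auto. apply Hc; auto. apply Hw.
Qed.

Lemma contained_of_sem (S : schema) (q1 q2 : cq S) :
  wf_cq S q1 -> (forall D, sem S q1 D -> sem S q2 D) -> contained S q1 q2.
Proof.
  intros [_ Hh] H I a HI Ha.
  assert (Hs : sem S q1 (I, a)).
  { split; [split|]; simpl; auto.
    intros x Hx. destruct Ha as [h [Hb Hm]]. subst a.
    apply in_map_iff in Hx. destruct Hx as [v [Hv Hin]]. subst x.
    destruct (Hh v Hin) as [at0 [Hat Hv]].
    exists (fst at0, map h (snd at0)). split; [apply Hb; auto|].
    simpl. apply in_map; auto. }
  apply H in Hs. apply Hs.
Qed.

Theorem proposition6 (S : schema) (q : cq S) (E : examples S) (q' : cq S) :
  annotated S q E -> wf_cq S q' ->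
  (pre_generalization S (cod_le S) q E q' <-> cont_generalization S q E q') /\
  (pre_specialization S (cod_le S) q E q' <-> cont_specialization S q E q').
Proof.
  intros _ Hwq'.
  unfold pre_generalization, cont_generalization, pre_specialization,
    cont_specialization, strict, strictly_contained, equivalent, cod_le, symdiff.
  split; split.
  - intros [H1 Hn]. split; auto. intros [q'' [Hc [Hf [Hqq [Hq''q' Hneq]]]]].
    apply Hn. exists q''. split; [auto|]. split.
    + intros D [[A B]|[A B]].
      * left. split; auto. intro C. apply B. eapply sem_of_contained; eauto.
      * right. split; auto. eapply sem_of_contained; eauto.
    + intro Hcod. apply Hneq. split; auto.
      apply contained_of_sem; auto. intros D HD.
      destruct (classic (sem S q D)) as [Hq|Hq].
      * eapply sem_of_contained; eauto.
      * destruct (Hcod D (or_intror (conj HD Hq))) as [[A B]|[A B]]; tauto.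
  - intros [H1 Hn]. split; auto. intros [q'' [[Hc [Hf Hqq]] [Hle Hnle]]].
    apply Hn. exists q''. refine (conj Hc (conj Hf (conj Hqq (conj _ _)))).
    + apply contained_of_sem; [exact (proj1 Hc)|]. intros D HD.
      destruct (classic (sem S q D)) as [Hq|Hq].
      * destruct H1 as [_ [_ Hqq']]. exact (sem_of_contained S q q' D Hqq' Hq).
      * destruct (Hle D (or_intror (conj HD Hq))) as [[A B]|[A B]]; tauto.
    + intros [Hc'' Hc2]. apply Hnle. intros D [[A B]|[A B]].
      * left. split; auto. intro C. apply B. exact (sem_of_contained S q'' q' D Hc'' C).
      * right. split; auto. exact (sem_of_contained S q' q'' D Hc2 A).
  - intros [H1 Hn]. split; auto. intros [q'' [Hc [Hf [[Hq'q'' Hneq] Hq''q]]]].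
    apply Hn. exists q''. split; [auto|]. split.
    + intros D [[A B]|[A B]].
      * left. split; auto. intro C. apply B. eapply sem_of_contained; eauto.
      * exfalso. apply B. eapply sem_of_contained; eauto.
    + intro Hcod. apply Hneq. split; auto.
      apply contained_of_sem; [exact (proj1 Hc)|]. intros D HD.
      assert (Hq : sem S q D) by (eapply sem_of_contained; eauto).
      destruct (classic (sem S q' D)) as [H|H]; auto.
      destruct (Hcod D (or_introl (conj Hq H))) as [[A B]|[A B]]; tauto.
  - intros [H1 Hn]. split; auto. intros [q'' [[Hc [Hf Hq''q]] [Hle Hnle]]].
    destruct H1 as [_ [_ Hq'q]].
    apply Hn. exists q''. refine (conj Hc (conj Hf (conj (conj _ _) Hq''q))).
    + apply contained_of_sem; auto. intros D HD.
      assert (Hq : sem S q D) by exact (sem_of_contained S q' q D Hq'q HD).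
      destruct (classic (sem S q'' D)) as [H|H]; auto.
      destruct (Hle D (or_introl (conj Hq H))) as [[A B]|[A B]]; tauto.
    + intros [_ Hc'']. apply Hnle. intros D [[A B]|[A B]].
      * left. split; auto. intro C. apply B. exact (sem_of_contained S q'' q' D Hc'' C).
      * exfalso. apply B. exact (sem_of_contained S q' q D Hq'q A).
Qed.
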